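(* Let $f:\mathbb{R}^d\to\mathbb{R}$ be convex, symmetric and sign invariant, $g(w,x)=f_\sigma(wx^\top-\bar w\bar x^\top)$, $X=wx^\top-\bar w\bar x^\top$, $Y\in\partial f_\sigma(X)$, and let $U\in O(d_1)$, $V\in O(d_2)$ (columns $U_i,V_i$) satisfy $X=U\mathrm{diag}(\sigma(X))V^\top$ and $Y=U\mathrm{diag}(\sigma(Y))V^\top$, with $d_1,d_2\ge2$. Then (1) $\max\{|\sigma_1(Y)\langle V_1,x\rangle|,|\sigma_2(Y)\langle V_2,x\rangle|\}\le\|Yx\|$ and $\max\{|\sigma_1(Y)\langle U_1,w\rangle|,|\sigma_2(Y)\langle U_2,w\rangle|\}\le\|Y^\top w\|$; (2) $g(w,x)-g(\bar w,\bar x)\le\sigma_1(Y)\sigma_1(X)+\sigma_2(Y)\sigma_2(X)$.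
   Context: Let $d=\min\{d_1,d_2\}$ and let $\sigma:\mathbb{R}^{d_1\times d_2}\to\mathbb{R}^d_+$ give singular values in nonincreasing order. $f$ is symmetric if $f(\pi s)=f(s)$ for all permutation matrices $\pi$, sign invariant if $f(Ds)=f(s)$ for all diagonal $D$ with entries in $\{\pm1\}$; $f_\sigma=f\circ\sigma$, which is convex when $f$ is, and $\partial f_\sigma(X)$ is its convex subdifferential. $\mathrm{diag}(s)$ is the $d_1\times d_2$ matrix with $s$ on the main diagonal. $\bar w\in\mathbb{R}^{d_1}$, $\bar x\in\mathbb{R}^{d_2}$ are fixed. *)

(* Defs.v *)
From HB Require Import structures.
From mathcomp Require Import all_boot all_order all_algebra all_fingroup.
From Stdlib Require Import ClassicalEpsilon.
Set Implicit Arguments. Unset Strict Implicit. Unset Printing Implicit Defensive.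
Import Order.TTheory GRing.Theory Num.Theory.
Local Open Scope ring_scope.

Section Defs.
Variable R : rcfType.

Definition diagmx (d1 d2 : nat) (s : 'rV[R]_(minn d1 d2)) : 'M[R]_(d1, d2) :=
  \matrix_(i < d1, j < d2)
    (if nat_of_ord i == nat_of_ord j then
       oapp (fun k : 'I_(minn d1 d2) => s 0 k) 0 (insub (nat_of_ord i))
     else 0).

Definition orthogonal_mx (n : nat) (U : 'M[R]_n) : Prop := U^T *m U = 1%:M.

Definition nonneg_nonincr (d : nat) (s : 'rV[R]_d) : Prop :=
  (forall i, 0 <= s 0 i) /\ (forall i j : 'I_d, (i <= j)%N -> s 0 j <= s 0 i).

Definition is_svals (d1 d2 : nat) (X : 'M[R]_(d1, d2)) (s : 'rV[R]_(minn d1 d2))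
  : Prop :=
  nonneg_nonincr s /\
  exists (U : 'M[R]_d1) (V : 'M[R]_d2),
    orthogonal_mx U /\ orthogonal_mx V /\ X = U *m diagmx s *m V^T.

Definition sigma (d1 d2 : nat) (X : 'M[R]_(d1, d2)) : 'rV[R]_(minn d1 d2) :=
  epsilon (inhabits 0) (fun s => is_svals X s).

(* k-th singular value (0-based), 0 if out of range *)
Definition sv (d1 d2 : nat) (X : 'M[R]_(d1, d2)) (k : nat) : R :=
  oapp (fun i : 'I_(minn d1 d2) => sigma X 0 i) 0 (insub k).

Definition convex_fun (d : nat) (f : 'rV[R]_d -> R) : Prop :=
  forall (x y : 'rV[R]_d) (t : R), 0 <= t -> t <= 1 ->
    f (t *: x + (1 - t) *: y) <= t * f x + (1 - t) * f y.

Definition symmetric_fun (d : nat) (f : 'rV[R]_d -> R) : Prop :=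
  forall (p : 'S_d) (x : 'rV[R]_d), f (col_perm p x) = f x.

Definition sign_invariant (d : nat) (f : 'rV[R]_d -> R) : Prop :=
  forall (e : 'I_d -> bool) (x : 'rV[R]_d),
    f (\row_i ((-1) ^+ e i * x 0 i)) = f x.

Definition fsigma (d1 d2 : nat) (f : 'rV[R]_(minn d1 d2) -> R)
  (X : 'M[R]_(d1, d2)) : R := f (sigma X).

Definition frob (d1 d2 : nat) (A B : 'M[R]_(d1, d2)) : R :=
  \sum_(i < d1) \sum_(j < d2) A i j * B i j.

Definition subdiff (d1 d2 : nat) (F : 'M[R]_(d1, d2) -> R)
  (X Y : 'M[R]_(d1, d2)) : Prop :=
  forall Z : 'M[R]_(d1, d2), F X + frob Y (Z - X) <= F Z.

Definition vdot (n : nat) (a b : 'cV[R]_n) : R := \sum_(i < n) a i 0 * b i 0.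

Definition vnorm (n : nat) (a : 'cV[R]_n) : R := Num.sqrt (vdot a a).

(* <U_k, w>, U_k the k-th (0-based) column of U; 0 if out of range *)
Definition coldot (n : nat) (U : 'M[R]_n) (k : nat) (w : 'cV[R]_n) : R :=
  oapp (fun j : 'I_n => vdot (col j U) w) 0 (insub k).

Definition gfun (d1 d2 : nat) (f : 'rV[R]_(minn d1 d2) -> R)
  (wbar : 'cV[R]_d1) (xbar : 'cV[R]_d2) (w : 'cV[R]_d1) (x : 'cV[R]_d2) : R :=
  fsigma f (w *m x^T - wbar *m xbar^T).

End Defs.

(* Main.v *)
Require Import Defs.
From HB Require Import structures.
From mathcomp Require Import all_boot all_order all_algebra all_fingroup.
From Stdlib Require Import ClassicalEpsilon.
Import Order.TTheory GRing.Theory Num.Theory.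
Set Implicit Arguments. Unset Strict Implicit. Unset Printing Implicit Defensive.
Local Open Scope ring_scope.

Section Aux.
Variable R : rcfType.

Lemma oapp_insub (T : Type) n k (F : 'I_n -> T) (d : T) (h : (k < n)%N) :
  oapp F d (insub k) = F (Ordinal h).
Proof. by rewrite insubT. Qed.

Lemma oapp_insub_ge (T : Type) n k (F : 'I_n -> T) (d : T) : ~~ (k < n)%N ->
  oapp F d (insub k) = d.
Proof. by move=> h; rewrite insubF //; apply/negbTE. Qed.

Lemma vdotE n (a b : 'cV[R]_n) : vdot a b = (a^T *m b) 0 0.
Proof. by rewrite /vdot mxE; apply: eq_bigr => i _; rewrite mxE. Qed.

Lemma vdot_ortho n (U : 'M[R]_n) (y : 'cV[R]_n) :
  orthogonal_mx U -> vdot (U *m y) (U *m y) = vdot y y.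
Proof.
by move=> hU; rewrite !vdotE trmx_mul -mulmxA (mulmxA U^T) hU mul1mx.
Qed.

Lemma vnorm_ortho n (U : 'M[R]_n) (y : 'cV[R]_n) :
  orthogonal_mx U -> vnorm (U *m y) = vnorm y.
Proof. by move=> hU; rewrite /vnorm vdot_ortho. Qed.

Lemma vnorm_ge n (u : 'cV[R]_n) i : `|u i 0| <= vnorm u.
Proof.
rewrite /vnorm -sqrtr_sqr ler_sqrt; last first.
  by apply: sumr_ge0 => j _; rewrite -expr2 sqr_ge0.
rewrite /vdot (bigD1 i) //= expr2 lerDl.
by apply: sumr_ge0 => j _; rewrite -expr2 sqr_ge0.
Qed.

Lemma ortho_mul n (A B : 'M[R]_n) :
  orthogonal_mx A -> orthogonal_mx B -> orthogonal_mx (A *m B).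
Proof.
rewrite /orthogonal_mx => hA hB.
by rewrite trmx_mul -mulmxA (mulmxA A^T) hA mul1mx.
Qed.

Lemma ortho_perm n (q : 'S_n) : orthogonal_mx (perm_mx (R:=R) q).
Proof. by rewrite /orthogonal_mx tr_perm_mx -perm_mxM mulVg perm_mx1. Qed.

Lemma ortho_tr n (A : 'M[R]_n) : orthogonal_mx A -> orthogonal_mx A^T.
Proof. by rewrite /orthogonal_mx trmxK => h; apply: mulmx1C. Qed.


Lemma insub_ord n k (h : (k < n)%N) : insub k = Some (Ordinal h) :> option 'I_n.
Proof. by rewrite insubT. Qed.

Lemma insub_ord_ge n k : ~~ (k < n)%N -> insub k = None :> option 'I_n.
Proof. by move=> h; rewrite insubF //; apply/negbTE. Qed.

Lemma insub_val n (k : 'I_n) : insub (nat_of_ord k) = Some k :> option 'I_n.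
Proof. by rewrite (insub_ord (ltn_ord k)); congr Some; apply/val_inj. Qed.

Definition extf (d n : nat) (p : 'S_d) (i : 'I_n) : 'I_n :=
  oapp (fun k : 'I_d => insubd i (val (p k))) i (insub (val i)).

Lemma extf_lt d n (h : (d <= n)%N) (p : 'S_d) (i : 'I_n) (hi : (i < d)%N) :
  nat_of_ord (extf p i) = nat_of_ord (p (Ordinal hi)).
Proof.
rewrite /extf oapp_insub; have := val_insubd i (val (p (Ordinal hi))); rewrite /= => ->.
by rewrite (leq_trans (ltn_ord _) h).
Qed.

Lemma extf_ge d n (p : 'S_d) (i : 'I_n) : ~~ (i < d)%N -> extf p i = i.
Proof. by move=> hi; rewrite /extf oapp_insub_ge. Qed.

Lemma extf_ge' d n (p : 'S_d) (i : 'I_n) : ~~ (i < d)%N -> nat_of_ord (extf p i) = i.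
Proof. by move=> hi; rewrite extf_ge. Qed.

Lemma extf_inj d n (h : (d <= n)%N) (p : 'S_d) : injective (extf (n:=n) p).
Proof.
move=> i j.
case: (ltnP i d) => hi; case: (ltnP j d) => hj.
- move/(congr1 (@nat_of_ord n)); rewrite (extf_lt h p hi) (extf_lt h p hj) => /val_inj /perm_inj.
  by move/(congr1 val) => /= /val_inj.
- rewrite (extf_ge _ (i:=j)) -?leqNgt // => /(congr1 (@nat_of_ord n)).
  rewrite (extf_lt h p hi) => e; move: (ltn_ord (p (Ordinal hi))).
  by rewrite e ltnNge hj.
- rewrite (extf_ge _ (i:=i)) -?leqNgt // => /(congr1 (@nat_of_ord n)).
  rewrite (extf_lt h p hj) => e; move: (ltn_ord (p (Ordinal hj))).
  by rewrite -e ltnNge hi.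
- by rewrite !extf_ge // -leqNgt.
Qed.

Definition extp d n (h : (d <= n)%N) (p : 'S_d) : 'S_n := perm (@extf_inj d n h p).

Lemma sort_perm d (a : 'rV[R]_d) :
  exists p : 'S_d, forall i j : 'I_d, (i <= j)%N -> a 0 (p j) <= a 0 (p i).
Proof.
set t := [tuple a 0 k | k < d].
have hp : perm_eq (sort >=%R t) t by rewrite perm_sort.
case/tuple_permP: hp => p hp; exists p => i j hij.
have hs : sorted >=%R (sort >=%R t).
  apply: sort_sorted => x y; exact: le_total.
have hsz : size (sort >=%R t) = d by rewrite size_sort size_tuple.
have htr : transitive (>=%R : rel R) by move=> x y z h1 h2; exact: le_trans h2 h1.
have hrf : reflexive (>=%R : rel R) by move=> x; exact: lexx.
have H := sorted_leq_nth htr hrf 0 hs.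
have := H i j; rewrite !inE hsz !ltn_ord => /(_ isT isT hij).
rewrite hp /= !(nth_map i) -?enumT ?size_enum_ord //.
by rewrite !nth_ord_enum !tnth_mktuple.
Qed.

Lemma diag_perm d1 d2 (a : 'rV[R]_(minn d1 d2)) (p : 'S_(minn d1 d2)) :
  diagmx (\row_k a 0 (p k)) =
  row_perm (extp (geq_minl d1 d2) p) (col_perm (extp (geq_minr d1 d2) p) (diagmx a)).
Proof.
apply/matrixP => i j; rewrite !mxE !permE.
case: (ltnP i (minn d1 d2)) => hi.
- rewrite (insub_ord hi) /= mxE (extf_lt (geq_minl d1 d2) p hi).
  case: (ltnP j (minn d1 d2)) => hj.
  +     rewrite (extf_lt (geq_minr d1 d2) p hj). set z := insub _. have -> : z = Some (p (Ordinal hi)) by exact: insub_val. rewrite /=.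
    have -> : (nat_of_ord (p (Ordinal hi)) == p (Ordinal hj)) = (nat_of_ord i == j).
      rewrite (inj_eq val_inj) (inj_eq perm_inj).
      by apply/eqP/eqP => [[]|h] //; apply/val_inj.
    case: eqP => // _; congr (a 0 _); exact/val_inj.
  + rewrite extf_ge' -?leqNgt //.
    have -> : (nat_of_ord i == j) = false by apply/negbTE; rewrite neq_ltn (leq_trans hi hj).
    have -> : (nat_of_ord (p (Ordinal hi)) == j) = false.
      by apply/negbTE; rewrite neq_ltn (leq_trans (ltn_ord _) hj).
    by [].
- rewrite insub_ord_ge -?leqNgt // extf_ge' -?leqNgt //.
  by rewrite insub_ord_ge -?leqNgt //= !if_same.
Qed.

Lemma ortho_sign n (c : 'rV[R]_n) : (forall i, c 0 i * c 0 i = 1) -> orthogonal_mx (diag_mx c).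
Proof.
move=> hc; rewrite /orthogonal_mx tr_diag_mx mul_diag_mx.
apply/matrixP => i j; rewrite !mxE.
by case: eqP => [->|_]; rewrite ?mulr1n ?mulr0n ?mulr0 ?hc.
Qed.

Lemma svd_exists d1 d2 (U : 'M[R]_d1) (V : 'M[R]_d2) (s : 'rV[R]_(minn d1 d2)) :
  orthogonal_mx U -> orthogonal_mx V -> exists t, is_svals (U *m diagmx s *m V^T) t.
Proof.
move=> hU hV.
pose a := \row_k `|s 0 k|.
have [p hp] := sort_perm a.
pose t := \row_k a 0 (p k).
pose c := \row_(i < d1) oapp (fun k => if s 0 k < 0 then -1 else 1 : R) 1 (insub (nat_of_ord i)).
have hc : forall i, c 0 i * c 0 i = 1.
  move=> i; rewrite mxE; case: (insub _) => [k|] /=; last by rewrite mulr1.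
  by case: ifP; rewrite ?mulrNN mulr1.
have C1 : diagmx s = diag_mx c *m diagmx a.
  rewrite mul_diag_mx; apply/matrixP => i j; rewrite !mxE.
  case: (ltnP i (minn d1 d2)) => hi.
  - rewrite (insub_ord hi) /= mxE; case: eqP => _; rewrite ?mulr0 //.
    case: ifP => h; first by rewrite ltr0_norm // mulN1r opprK.
    by rewrite ger0_norm ?mul1r // leNgt h.
  - by rewrite insub_ord_ge -?leqNgt //= !if_same mulr0.
set q1 := extp (geq_minl d1 d2) p.
set q2 := extp (geq_minr d1 d2) p.
have C2 : diagmx t = perm_mx q1 *m diagmx a *m perm_mx q2^-1.
  by rewrite /t /q1 /q2 diag_perm row_permE col_permE mulmxA.
have C3 : diagmx a = perm_mx q1^-1 *m diagmx t *m perm_mx q2.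
  rewrite C2 !mulmxA -perm_mxM mulVg perm_mx1 mul1mx -mulmxA -perm_mxM mulVg.
  by rewrite perm_mx1 mulmx1.
exists t; split.
  split => [i|i j hij]; rewrite !mxE ?normr_ge0 //.
  by have := hp i j hij; rewrite !mxE.
exists (U *m diag_mx c *m perm_mx q1^-1), (V *m perm_mx q2^-1).
split; first by apply: ortho_mul; [apply: ortho_mul => //; exact: ortho_sign|exact: ortho_perm].
split; first by apply: ortho_mul => //; exact: ortho_perm.
rewrite C1 C3 trmx_mul tr_perm_mx invgK !mulmxA.
done.
Qed.

Lemma sigma_ok d1 d2 (X : 'M[R]_(d1, d2)) (U : 'M[R]_d1) (V : 'M[R]_d2) s :
  orthogonal_mx U -> orthogonal_mx V -> X = U *m diagmx s *m V^T ->
  nonneg_nonincr (sigma X).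
Proof.
move=> hU hV hX; rewrite /sigma.
have := epsilon_spec (inhabits 0) (fun s => is_svals X s).
by rewrite hX => /(_ (svd_exists s hU hV)) [].
Qed.

Lemma frob_tr d1 d2 (A B : 'M[R]_(d1, d2)) : frob A B = \tr (A^T *m B).
Proof.
rewrite /frob /mxtrace exchange_big; apply: eq_bigr => j _; rewrite mxE.
by apply: eq_bigr => i _; rewrite mxE.
Qed.

Lemma frob_svd d1 d2 (U : 'M[R]_d1) (V : 'M[R]_d2) (A B : 'M[R]_(d1, d2)) :
  orthogonal_mx U -> orthogonal_mx V ->
  frob (U *m A *m V^T) (U *m B *m V^T) = frob A B.
Proof.
move=> hU hV; rewrite !frob_tr !trmx_mul trmxK -!mulmxA (mulmxA U^T) hU mul1mx.
by rewrite mxtrace_mulC -!mulmxA hV mulmx1.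
Qed.

Lemma frob_diag d1 d2 (a b : 'rV[R]_(minn d1 d2)) :
  frob (diagmx a) (diagmx b) = \sum_(k < minn d1 d2) a 0 k * b 0 k.
Proof.
pose F (n : nat) := oapp (fun k => a 0 k * b 0 k) 0 (insub n : option 'I_(minn d1 d2)).
have -> : \sum_(k < minn d1 d2) a 0 k * b 0 k = \sum_(k < minn d1 d2) F k.
  apply: eq_bigr => k _; rewrite /F (insub_ord (ltn_ord k)) /=.
  by congr (a 0 _ * b 0 _); apply: val_inj.
rewrite (big_ord_widen _ _ (geq_minl d1 d2)) big_mkcond /frob.
apply: eq_bigr => i _.
case: (ltnP i (minn d1 d2)) => hi.
- have hi2 : (i < d2)%N by apply: leq_trans hi (geq_minr _ _).
  rewrite (bigD1 (Ordinal hi2)) //= big1 ?addr0.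
    by rewrite !mxE /= eqxx /F !(insub_ord hi).
  move=> j hj; rewrite !mxE.
  have -> : (nat_of_ord i == j) = false.
    apply/negbTE; apply: contra hj => /eqP e; apply/eqP/val_inj => /=; by rewrite e.
  by rewrite mul0r.
- apply: big1 => j _; rewrite !mxE insub_ord_ge -?leqNgt //=.
  by rewrite !if_same mul0r.
Qed.

Lemma rank_colsub m n n' (g : 'I_n' -> 'I_n) (B : 'M[R]_(m, n)) :
  (\rank (colsub g B) <= \rank B)%N.
Proof.
by rewrite -mxrank_tr trmx_mxsub -(mxrank_tr B); apply: mxrankS; apply: rowsub_sub.
Qed.

Lemma rank_mxsub m n m' n' (f : 'I_m' -> 'I_m) (g : 'I_n' -> 'I_n) (B : 'M[R]_(m, n)) :
  (\rank (mxsub f g B) <= \rank B)%N.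
Proof.
rewrite mxsubcr; apply: leq_trans (rank_colsub _ _) _.
by apply: mxrankS; apply: rowsub_sub.
Qed.

Lemma rank_outer m n (w : 'cV[R]_m) (x : 'cV[R]_n) : (\rank (w *m x^T) <= 1)%N.
Proof. by apply: leq_trans (mxrankM_maxl _ _) _; apply: rank_leq_col. Qed.

Lemma sv_rank2 d1 d2 (w wb : 'cV[R]_d1) (x xb : 'cV[R]_d2) (U : 'M[R]_d1) (V : 'M[R]_d2)
  (b : 'rV[R]_(minn d1 d2)) :
  orthogonal_mx U -> orthogonal_mx V ->
  w *m x^T - wb *m xb^T = U *m diagmx b *m V^T -> nonneg_nonincr b ->
  forall k : 'I_(minn d1 d2), (2 <= k)%N -> b 0 k = 0.
Proof.
move=> hU hV hX [hnn hmon] k hk.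
have h3 : (3 <= minn d1 d2)%N by exact: leq_ltn_trans hk (ltn_ord k).
have h2 : (2 < minn d1 d2)%N by [].
pose k2 := Ordinal h2.
suff e2 : b 0 k2 = 0.
  by apply/le_anti; rewrite hnn andbT -e2; apply: hmon.
apply/eqP; apply: contraT => hne.
have hpos : 0 < b 0 k2 by rewrite lt_def hne hnn.
have hD : diagmx b = U^T *m (w *m x^T - wb *m xb^T) *m V.
  by rewrite hX !mulmxA hU mul1mx -mulmxA hV mulmx1.
have hrD : (\rank (diagmx b) <= 2)%N.
  rewrite hD; apply: leq_trans (mxrankM_maxl _ _) _.
  apply: leq_trans (mxrankM_maxr _ _) _.
  apply: leq_trans (mxrank_add _ _) _; rewrite mxrank_opp.
  by rewrite -[2%N]/(1 + 1)%N leq_add ?rank_outer.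
have h31 : (3 <= d1)%N by apply: leq_trans h3 (geq_minl _ _).
have h32 : (3 <= d2)%N by apply: leq_trans h3 (geq_minr _ _).
pose M := mxsub (widen_ord h31) (widen_ord h32) (diagmx b).
have hM : M = diag_mx (\row_(i < 3) b 0 (widen_ord h3 i)).
  apply/matrixP => i j; rewrite !mxE /=.
  have hi : (i < minn d1 d2)%N by apply: leq_trans (ltn_ord i) h3.
  rewrite (insub_ord hi) /=.
  case: (i =P j) => [e|hij]; first by rewrite -e eqxx mulr1n; congr (b 0 _); apply: val_inj.
  have -> : (nat_of_ord i == j) = false by apply/negbTE/eqP => e; apply: hij; apply: val_inj.
  by rewrite mulr0n.
have hrM : \rank M = 3.
  rewrite hM; apply: mxrank_unit; rewrite unitmxE det_diag unitfE.
  rewrite gt_eqF //; apply: prodr_gt0 => i _; rewrite mxE.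
  apply: lt_le_trans hpos _; apply: hmon => /=.
  by rewrite -ltnS ltn_ord.
have := rank_mxsub (widen_ord h31) (widen_ord h32) (diagmx b).
by rewrite -/M hrM => /leq_trans /(_ hrD).
Qed.

Lemma diagmx_mulE d1 d2 (a : 'rV[R]_(minn d1 d2)) (z : 'cV[R]_d2) (i : 'I_d1)
  (hi : (i < minn d1 d2)%N) (hi2 : (i < d2)%N) :
  (diagmx a *m z) i 0 = a 0 (Ordinal hi) * z (Ordinal hi2) 0.
Proof.
rewrite mxE (bigD1 (Ordinal hi2)) //= big1 ?addr0.
  by rewrite !mxE /= eqxx (insub_ord hi).
move=> j hj; rewrite !mxE.
have -> : (nat_of_ord i == j) = false.
  apply/negbTE; apply: contra hj => /eqP e; apply/eqP/val_inj => /=; by rewrite e.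
by rewrite mul0r.
Qed.

Lemma trdiagmx_mulE d1 d2 (a : 'rV[R]_(minn d1 d2)) (z : 'cV[R]_d1) (i : 'I_d2)
  (hi : (i < minn d1 d2)%N) (hi1 : (i < d1)%N) :
  ((diagmx a)^T *m z) i 0 = a 0 (Ordinal hi) * z (Ordinal hi1) 0.
Proof.
rewrite mxE (bigD1 (Ordinal hi1)) //= big1 ?addr0.
  by rewrite !mxE /= eqxx (insub_ord hi).
move=> j hj; rewrite !mxE.
have -> : (nat_of_ord j == i) = false.
  apply/negbTE; apply: contra hj => /eqP e; apply/eqP/val_inj => /=; by rewrite e.
by rewrite mul0r.
Qed.

Lemma vdot_col n (V : 'M[R]_n) (j : 'I_n) (x : 'cV[R]_n) :
  vdot (col j V) x = (V^T *m x) j 0.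
Proof. by rewrite /vdot mxE; apply: eq_bigr => i _; rewrite !mxE. Qed.

Lemma frobN d1 d2 (A B : 'M[R]_(d1, d2)) : frob A (- B) = - frob A B.
Proof.
rewrite /frob -sumrN; apply: eq_bigr => i _; rewrite -sumrN.
by apply: eq_bigr => j _; rewrite mxE mulrN.
Qed.

End Aux.

Theorem lemmaB2 (R : rcfType) (d1 d2 : nat) (hd1 : (1 < d1)%N) (hd2 : (1 < d2)%N)
  (f : 'rV[R]_(minn d1 d2) -> R)
  (hconv : convex_fun f) (hsym : symmetric_fun f) (hsign : sign_invariant f)
  (wbar w : 'cV[R]_d1) (xbar x : 'cV[R]_d2)
  (Y : 'M[R]_(d1, d2)) (U : 'M[R]_d1) (V : 'M[R]_d2)
  (hY : subdiff (fsigma f) (w *m x^T - wbar *m xbar^T) Y)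
  (hU : orthogonal_mx U) (hV : orthogonal_mx V)
  (hX : w *m x^T - wbar *m xbar^T = U *m diagmx (sigma (w *m x^T - wbar *m xbar^T)) *m V^T)
  (hYsvd : Y = U *m diagmx (sigma Y) *m V^T) :
  let X := w *m x^T - wbar *m xbar^T in
  (Num.max `|sv Y 0 * coldot V 0 x| `|sv Y 1 * coldot V 1 x| <= vnorm (Y *m x) /\
   Num.max `|sv Y 0 * coldot U 0 w| `|sv Y 1 * coldot U 1 w| <= vnorm (Y^T *m w)) /\
  gfun f wbar xbar w x - gfun f wbar xbar wbar xbar <= sv Y 0 * sv X 0 + sv Y 1 * sv X 1.
Proof.
move=> X; rewrite /X.
have hm : (1 < minn d1 d2)%N by rewrite leq_min hd1 hd2.
have h0 : (0 < minn d1 d2)%N by apply: ltn_trans hm.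
have h01 : (0 < d1)%N by apply: ltn_trans hd1.
have h02 : (0 < d2)%N by apply: ltn_trans hd2.
have ha0 : sv Y 0 = sigma Y 0 (Ordinal h0) by rewrite /sv (insub_ord h0).
have ha1 : sv Y 1 = sigma Y 0 (Ordinal hm) by rewrite /sv (insub_ord hm).
split; [split|].
- have -> : Y *m x = U *m (diagmx (sigma Y) *m (V^T *m x)) by rewrite {1}hYsvd !mulmxA.
  rewrite vnorm_ortho // ge_max ha0 ha1 /coldot (insub_ord h02) (insub_ord hd2) /= !vdot_col.
  apply/andP; split.
  + have := vnorm_ge (diagmx (sigma Y) *m (V^T *m x)) (Ordinal h01).
    by rewrite (diagmx_mulE _ _ (i := Ordinal h01) h0 h02).
  + have := vnorm_ge (diagmx (sigma Y) *m (V^T *m x)) (Ordinal hd1).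
    by rewrite (diagmx_mulE _ _ (i := Ordinal hd1) hm hd2).
- have -> : Y^T *m w = V *m ((diagmx (sigma Y))^T *m (U^T *m w)).
    by rewrite {1}hYsvd !trmx_mul trmxK !mulmxA.
  rewrite vnorm_ortho // ge_max ha0 ha1 /coldot (insub_ord h01) (insub_ord hd1) /= !vdot_col.
  apply/andP; split.
  + have := vnorm_ge ((diagmx (sigma Y))^T *m (U^T *m w)) (Ordinal h02).
    by rewrite (trdiagmx_mulE _ _ (i := Ordinal h02) h0 h01).
  + have := vnorm_ge ((diagmx (sigma Y))^T *m (U^T *m w)) (Ordinal hd2).
    by rewrite (trdiagmx_mulE _ _ (i := Ordinal hd2) hm hd1).
- have H := hY (wbar *m xbar^T - wbar *m xbar^T).
  have Hf : frob Y (wbar *m xbar^T - wbar *m xbar^T - (w *m x^T - wbar *m xbar^T))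
      = - frob Y (w *m x^T - wbar *m xbar^T) by rewrite subrr sub0r frobN.
  rewrite Hf in H.
  have hb := sigma_ok hU hV hX.
  have hz := sv_rank2 hU hV hX hb.
  have FYX : frob Y (w *m x^T - wbar *m xbar^T) = sv Y 0 * sv (w *m x^T - wbar *m xbar^T) 0 + sv Y 1 * sv (w *m x^T - wbar *m xbar^T) 1.
    rewrite [in LHS]hYsvd [in LHS]hX frob_svd // frob_diag.
    rewrite ha0 ha1 /sv (insub_ord h0) (insub_ord hm) /=.
    rewrite (bigD1 (Ordinal h0)) //= (bigD1 (Ordinal hm)) //= big1 ?addr0 ?addrA //.
    move=> k /andP [hk1 hk0]; rewrite hz ?mulr0 //.
    by case: k hk1 hk0 => [[|[|k]] hk].
  rewrite /gfun -FYX; move: H; rewrite /fsigma.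
  have aux : forall a b c : R, a - b <= c -> a - c <= b.
    by move=> a b c; rewrite !lerBlDr addrC.
  exact: aux.
Qed.
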